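(* Let $A\in\mathbb{R}^{N\times N}$ be symmetric positive definite, $b\in\mathbb{R}^N$, $x_0\in\mathbb{R}^N$ with $r_0=b-Ax_0\neq0$, and let $n$ be the grade of $r_0$ with respect to $A$. Run the conjugate gradient method (exact arithmetic): $p_0=r_0$ and, for $k=1,2,\dots$, $$\gamma_{k-1}=\frac{r_{k-1}^Tr_{k-1}}{p_{k-1}^TAp_{k-1}},\quad x_k=x_{k-1}+\gamma_{k-1}p_{k-1},\quad r_k=r_{k-1}-\gamma_{k-1}Ap_{k-1},\quad \delta_k=\frac{r_k^Tr_k}{r_{k-1}^Tr_{k-1}},\quad p_k=r_k+\delta_kp_{k-1}.$$ For $1\le k\le n$ let $L_k^T$ be the $k\times k$ upper bidiagonal matrix with diagonal entries $1/\sqrt{\gamma_{j-1}}$, $j=1,\dots,k$, and superdiagonal entries $\sqrt{\delta_j/\gamma_{j-1}}$, $j=1,\dots,k-1$, let $T_k=L_kL_k^T$, and define $\xi_k=\|r_0\|^2e_1^TT_k^{-2}e_1$ (with $e_1$ the first column of the $k\times k$ identity), and $\xi_0=0$. Let $\psi_i=\gamma_i\|r_i\|^2$, and let $\phi_0=1$, $\phi_k=\phi_{k-1}/(\phi_{k-1}+\delta_k)$ for $k\ge1$. Then $$\xi_k=\sum_{j=0}^{k-1}\|r_j\|^{-2}\Big(\sum_{i=j}^{k-1}\psi_i\Big)^2,$$ and $\xi_{k+1}$, $k=0,1,2,\dots$ (with $k+1\le n$), can be computed by the recurrences $$\vartheta_{k+1}=\vartheta_k+\gamma_k\phi_k^{-1},\qquad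 \xi_{k+1}=\xi_k+\psi_k(\vartheta_{k+1}+\vartheta_k),$$ where $\vartheta_0=0$ and $\xi_0=0$.
   Context: $\|\cdot\|$ is the Euclidean norm. The grade $n$ of $r_0$ with respect to $A$ is the maximal dimension of the Krylov subspaces $\mathrm{span}\{r_0,Ar_0,\dots,A^{k-1}r_0\}$; for $k\le n$ all CG quantities above are well defined and $\gamma_{k-1}>0$. $T_k$ coincides with the Jacobi matrix of Lanczos recurrence coefficients generated by $A$ and $r_0/\|r_0\|$. *)

(* Defs.v *)
From HB Require Import structures.
From mathcomp Require Import all_boot all_order all_algebra.
Set Implicit Arguments. Unset Strict Implicit. Unset Printing Implicit Defensive.
Import Order.TTheory GRing.Theory Num.Theory.
Local Open Scope ring_scope.

Section CG.
Variables (R : rcfType) (N : nat).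
Implicit Types (u v : 'cV[R]_N) (A : 'M[R]_N).

Definition dotv u v : R := (u^T *m v) ord0 ord0.

Definition spd A : Prop :=
  A^T = A /\ forall v : 'cV[R]_N, v != 0 -> 0 < dotv v (A *m v).

(* Krylov matrix: rows are (A^i r0)^T, i < k; its rank is dim span{r0,...,A^(k-1) r0} *)
Definition krylov A (r0 : 'cV[R]_N) (k : nat) : 'M[R]_(k, N) :=
  \matrix_(i < k) (A ^+ i *m r0)^T.

Definition is_grade A (r0 : 'cV[R]_N) (n : nat) : Prop :=
  (exists k, \rank (krylov A r0 k) = n) /\ (forall k, (\rank (krylov A r0 k) <= n)%N).

Variables (A : 'M[R]_N) (b x0 : 'cV[R]_N).

Definition r0 : 'cV[R]_N := b - A *m x0.

Fixpoint cg_state (k : nat) : 'cV[R]_N * 'cV[R]_N * 'cV[R]_N :=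
  match k with
  | 0 => (x0, r0, r0)
  | k'.+1 =>
    let: (x, r, p) := cg_state k' in
    let g := dotv r r / dotv p (A *m p) in
    let x' := x + g *: p in
    let r' := r - g *: (A *m p) in
    let d := dotv r' r' / dotv r r in
    (x', r', r' + d *: p)
  end.

Definition cg_x k := (cg_state k).1.1.
Definition cg_r k := (cg_state k).1.2.
Definition cg_p k := (cg_state k).2.

Definition gamma k : R := dotv (cg_r k) (cg_r k) / dotv (cg_p k) (A *m cg_p k).
(* delta_k = r_k^T r_k / r_{k-1}^T r_{k-1}, used only for k >= 1 *)
Definition delta k : R := dotv (cg_r k) (cg_r k) / dotv (cg_r k.-1) (cg_r k.-1).

(* L_k^T : k x k upper bidiagonal; 0-indexed row i: diagonal 1/sqrt(gamma_i),
   superdiagonal (i, i+1): sqrt(delta_{i+1}/gamma_i) *)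
Definition LkT (k : nat) : 'M[R]_k :=
  \matrix_(i < k, j < k)
    (if (j : nat) == i then 1 / Num.sqrt (gamma i)
     else if (j : nat) == i.+1 then Num.sqrt (delta i.+1 / gamma i) else 0).

Definition Tk (k : nat) : 'M[R]_k := (LkT k)^T *m LkT k.

Definition xi (k : nat) : R :=
  match k with
  | 0 => 0
  | k'.+1 => dotv r0 r0 * (invmx (Tk k'.+1) *m invmx (Tk k'.+1)) ord0 ord0
  end.

Definition psi i : R := gamma i * dotv (cg_r i) (cg_r i).

Fixpoint phi (k : nat) : R :=
  match k with
  | 0 => 1
  | k'.+1 => phi k' / (phi k' + delta k'.+1)
  end.

Fixpoint vartheta (k : nat) : R :=
  match k with
  | 0 => 0
  | k'.+1 => vartheta k' + gamma k' / phi k'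
  end.

End CG.

(* Main.v *)
Require Import Defs.
From HB Require Import structures.
From mathcomp Require Import all_boot all_order all_algebra.
From mathcomp Require Import ring lra.
Set Implicit Arguments. Unset Strict Implicit. Unset Printing Implicit Defensive.
Import Order.TTheory GRing.Theory Num.Theory.
Local Open Scope ring_scope.

Section Alg.
Variables (R : rcfType).

Lemma sum_pick m (i : nat) (F : nat -> R) :
  \sum_(j < m) (if (j : nat) == i then F j else 0) = if (i < m)%N then F i else 0.
Proof.
case: (ltnP i m) => h.
  rewrite (bigD1 (Ordinal h)) //= eqxx big1 ?addr0 // => j hj.
  rewrite ifF //; apply: contraNF hj => /eqP e; apply/eqP/val_inj => //.
rewrite big1 // => j _; rewrite ifF //; apply: ltn_eqF; exact: leq_trans (ltn_ord j) h.
Qed.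

Lemma sign_sqr (l : nat) : ((-1) ^+ l : R) ^+ 2 = 1.
Proof. exact: sqrr_sign. Qed.

Lemma pt (i l : nat) (a b : R) : (if i == l then a else if i == l.+1 then b else 0) = (if l == i then a else 0) + (if l == i.-1 then (if (0 < i)%N then b else 0) else 0).
Proof.
case: (eqVneq l i) => [->|nli].
  by case: i => [|i] //=; rewrite ?eqxx ?addr0 // (gtn_eqF (ltnSn i)) addr0.
rewrite add0r; case: i nli => [|i] nli /=; first by case: ifP.
by rewrite eqSS eq_sym.
Qed.

Variables (g rho : nat -> R) (k : nat).
Notation m := k.+1.
Hypothesis hpos : forall i, (i < m)%N -> 0 < g i /\ 0 < rho i.

Definition Mbd : 'M[R]_m := \matrix_(i < m, j < m)
    (if (j : nat) == i then 1 / Num.sqrt (g i)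
     else if (j : nat) == i.+1 then Num.sqrt (rho i.+1 / rho i / g i) else 0).

Definition Gs i := Num.sqrt (g i).
Definition Ps i := Num.sqrt (rho i).
Definition Ssum j := \sum_(j <= i < m) g i * rho i.

Lemma G_gt0 i : (i < m)%N -> 0 < Gs i.
Proof. by move=> h; rewrite sqrtr_gt0; case: (hpos h). Qed.
Lemma P_gt0 i : (i < m)%N -> 0 < Ps i.
Proof. by move=> h; rewrite sqrtr_gt0; case: (hpos h). Qed.
Lemma G2 i : (i < m)%N -> g i = Gs i ^+ 2.
Proof. by move=> h; rewrite sqr_sqrtr //; case: (hpos h) => /ltW. Qed.
Lemma P2 i : (i < m)%N -> rho i = Ps i ^+ 2.
Proof. by move=> h; rewrite sqr_sqrtr //; case: (hpos h) => _ /ltW. Qed.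

Lemma super i : (i.+1 < m)%N ->
  Num.sqrt (rho i.+1 / rho i / g i) = Ps i.+1 / (Ps i * Gs i).
Proof.
move=> h; have hi : (i < m)%N by exact: ltnW.
have g0 := G_gt0 hi; have p0 := P_gt0 hi; have p1 := P_gt0 h.
rewrite (P2 h) (P2 hi) (G2 hi).
have -> : Ps i.+1 ^+ 2 / Ps i ^+ 2 / Gs i ^+ 2 = (Ps i.+1 / (Ps i * Gs i)) ^+ 2.
  field; rewrite ?gt_eqF //.
rewrite sqrtr_sqr ger0_norm // divr_ge0 // ?ltW // mulr_gt0 //.
Qed.


Definition Y j := (-1) ^+ j * Ssum j / (Ps j * Ps 0).
Definition Z i := (-1) ^+ i * Gs i * Ps i / Ps 0.
Definition yv : 'cV[R]_m := \col_(j < m) Y j.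
Definition zv : 'cV[R]_m := \col_(j < m) Z j.
Definition e1v : 'cV[R]_m := \col_(j < m) ((j : nat) == 0%N)%:R.

Lemma SS j : (j < m)%N -> Ssum j = g j * rho j + Ssum j.+1.
Proof. by move=> h; rewrite /Ssum big_ltn. Qed.

Lemma My : Mbd *m yv = zv.
Proof.
apply/matrixP => i j; rewrite ord1 !mxE.
under eq_bigr => l _ do rewrite !mxE.
have H : forall l : 'I_m,
   (if (l : nat) == i then 1 / Num.sqrt (g i) else if (l : nat) == i.+1 then
       Num.sqrt (rho i.+1 / rho i / g i) else 0) * Y l =
   (if (l : nat) == i then 1 / Num.sqrt (g i) * Y l else 0) +
   (if (l : nat) == i.+1 then Num.sqrt (rho i.+1 / rho i / g i) * Y l else 0).
  move=> l; case: eqP => [->|_]; first by rewrite (ltn_eqF (ltnSn i)) addr0.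
  by case: eqP => _; rewrite ?mul0r add0r.
rewrite (eq_bigr _ (fun l _ => H l)) big_split /=.
rewrite (sum_pick _ _ (fun l => 1 / Num.sqrt (g i) * Y l)).
rewrite (sum_pick _ _ (fun l => Num.sqrt (rho i.+1 / rho i / g i) * Y l)) ltn_ord.
have hi := ltn_ord i; have g0 := G_gt0 hi; have p0 := P_gt0 hi.
have p00 := P_gt0 (ltn0Sn k).
rewrite /Y /Z (SS hi).
case: ifP => h.
  rewrite (super h) exprS -/(Gs i) (G2 hi) (P2 hi); have p1 := P_gt0 h.
  field; rewrite ?gt_eqF //.
have -> : Ssum i.+1 = 0 by rewrite /Ssum big_geq // leqNgt h.
rewrite -/(Gs i) (G2 hi) (P2 hi).
field; rewrite ?gt_eqF //.
Qed.

Lemma MTz : Mbd^T *m zv = e1v.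
Proof.
apply/matrixP => i j; rewrite ord1 !mxE.
under eq_bigr => l _ do rewrite !mxE.
have H : forall l : 'I_m,
   (if (i : nat) == l then 1 / Num.sqrt (g l) else if (i : nat) == l.+1 then
       Num.sqrt (rho l.+1 / rho l / g l) else 0) * Z l =
   (if (l : nat) == i then 1 / Num.sqrt (g l) * Z l else 0) +
   (if (l : nat) == i.-1 then
       (if (0 < i)%N then Num.sqrt (rho l.+1 / rho l / g l) * Z l else 0) else 0).
  by move=> l; rewrite pt mulrDl; congr (_ + _); do !case: ifP => _ //; rewrite mul0r.
rewrite (eq_bigr _ (fun l _ => H l)) big_split /=.
rewrite (sum_pick _ _ (fun l => 1 / Num.sqrt (g l) * Z l)).
rewrite (sum_pick _ _ (fun l => if (0 < i)%N then Num.sqrt (rho l.+1 / rho l / g l) * Z l else 0)) ltn_ord.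
have hi := ltn_ord i; have g0 := G_gt0 hi; have p0 := P_gt0 hi.
have p00 := P_gt0 (ltn0Sn k).
rewrite /Z.
case: (i : nat) hi g0 p0 => [|i'] hi g0 p0 /=.
  by rewrite -/(Gs 0) expr0; field; rewrite ?gt_eqF.
have hi' : (i' < m)%N by exact: ltnW.
rewrite hi' (super hi) exprS -/(Gs i'.+1); have := G_gt0 hi'; have := P_gt0 hi' => p1 g1.
field; rewrite ?gt_eqF //.
Qed.


Lemma xi_formula : rho 0 * (invmx (Mbd^T *m Mbd) *m invmx (Mbd^T *m Mbd)) ord0 ord0 =
  \sum_(0 <= j < m) (rho j)^-1 * (Ssum j) ^+ 2.
Proof.
set T := Mbd^T *m Mbd.
have Tsym : T^T = T by rewrite /T trmx_mul trmxK.
have Mdet : \det Mbd != 0.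
  rewrite -det_tr det_trig; last first.
    apply/is_trig_mxP => i j lt; rewrite !mxE.
    by rewrite (ltn_eqF lt) (ltn_eqF (ltn_trans lt (ltnSn j))).
  apply/prodf_neq0 => i _; rewrite !mxE eqxx mul1r invr_eq0 gt_eqF //.
  exact: G_gt0.
have Tunit : T \in unitmx by rewrite unitmxE /T det_mulmx det_tr unitfE mulf_neq0.
have Ty : T *m yv = e1v by rewrite /T -mulmxA My MTz.
have Te : invmx T *m e1v = yv by rewrite -Ty mulKmx.
have Tl : forall l, invmx T l ord0 = Y l.
  move=> l; have := congr1 (fun X : 'M[R]_(m, 1) => X l ord0) Te; rewrite /= !mxE => <-.
  rewrite (bigD1 ord0) //= big1 ?addr0; first by rewrite !mxE /= mulr1.
  by move=> j nj; rewrite !mxE; case: eqP => [e|]; [case/eqP: nj; apply: val_inj | rewrite mulr0].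
rewrite !mxE big_mkord mulr_sumr; apply: eq_bigr => l _.
have -> : invmx T ord0 l = invmx T l ord0.
  have -> : invmx T ord0 l = (invmx T)^T l ord0 by rewrite mxE.
  by rewrite trmx_inv Tsym.
rewrite Tl -expr2 /Y !exprMn exprVn sign_sqr mul1r.
have hl := ltn_ord l; have := P_gt0 hl; have := P_gt0 (ltn0Sn k) => p0 pl.
rewrite (P2 hl) (P2 (ltn0Sn k)) exprMn; field; rewrite ?gt_eqF //.
Qed.

End Alg.

Section Rec.
Variables (R : fieldType) (ps rho : nat -> R).
Definition Sk k j := \sum_(j <= i < k) ps i.
Definition Fk k := \sum_(0 <= j < k) (rho j)^-1 * (Sk k j) ^+ 2.
Definition Vk k := \sum_(0 <= j < k) (rho j)^-1 * Sk k j.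
Definition Qk k := \sum_(0 <= j < k.+1) (rho j)^-1.

Lemma SkS k j : (j <= k)%N -> Sk k.+1 j = Sk k j + ps k.
Proof. by move=> h; rewrite /Sk big_nat_recr. Qed.
Lemma Skk k : Sk k k = 0.
Proof. by rewrite /Sk big_geq. Qed.

Lemma Fk_ext k : Fk k = \sum_(0 <= j < k.+1) (rho j)^-1 * (Sk k j) ^+ 2.
Proof. by rewrite /Fk big_nat_recr //= Skk expr0n mulr0 addr0. Qed.
Lemma Vk_ext k : Vk k = \sum_(0 <= j < k.+1) (rho j)^-1 * Sk k j.
Proof. by rewrite /Vk big_nat_recr //= Skk mulr0 addr0. Qed.
Lemma FkS k : Fk k.+1 = \sum_(0 <= j < k.+1) (rho j)^-1 * (Sk k j + ps k) ^+ 2.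
Proof. by apply: eq_big_nat => j /andP [_ h]; rewrite SkS. Qed.
Lemma VkS k : Vk k.+1 = \sum_(0 <= j < k.+1) (rho j)^-1 * (Sk k j + ps k).
Proof. by apply: eq_big_nat => j /andP [_ h]; rewrite SkS. Qed.

Lemma F_rec k : Fk k.+1 = Fk k + ps k * (Vk k.+1 + Vk k).
Proof.
rewrite FkS Fk_ext VkS Vk_ext -big_split mulr_sumr -big_split /=.
by apply: eq_bigr => j _; ring.
Qed.

Lemma V_rec k : Vk k.+1 = Vk k + ps k * Qk k.
Proof.
rewrite VkS Vk_ext /Qk mulr_sumr -big_split /=.
by apply: eq_bigr => j _; ring.
Qed.
End Rec.

Section S.
Variables (R : rcfType) (N : nat) (A : 'M[R]_N) (b x0 : 'cV[R]_N).

Notation rr := (cg_r A b x0).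
Notation pp := (cg_p A b x0).
Notation g := (gamma A b x0).
Notation dl := (delta A b x0).
Notation r00 := (r0 A b x0).

Lemma cg_r0 : rr 0 = r00. Proof. by []. Qed.
Lemma cg_p0 : pp 0 = r00. Proof. by []. Qed.
Lemma cg_rS k : rr k.+1 = rr k - g k *: (A *m pp k).
Proof. by rewrite /gamma /cg_r /cg_p /=; case: (cg_state A b x0 k) => [[x r] p]. Qed.
Lemma cg_pS k : pp k.+1 = rr k.+1 + dl k.+1 *: pp k.
Proof.
by rewrite /delta /gamma /cg_r /cg_p /=; case: (cg_state A b x0 k) => [[x r] p].
Qed.

Lemma dotvE (u v : 'cV[R]_N) : dotv u v = \sum_i u i ord0 * v i ord0.
Proof. by rewrite /dotv !mxE; apply: eq_bigr => i _; rewrite mxE. Qed.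

Lemma dotv_ge0 (v : 'cV[R]_N) : 0 <= dotv v v.
Proof. rewrite dotvE sumr_ge0 // => i _; exact: mulr_ge0_le0 || by rewrite -expr2 sqr_ge0. Qed.

Lemma dotv_gt0 (v : 'cV[R]_N) : v != 0 -> 0 < dotv v v.
Proof.
move=> nz; rewrite lt0r dotv_ge0 andbT; apply/negP => /eqP.
rewrite dotvE => /psumr_eq0P H; case/eqP: nz; apply/matrixP => i j.
have H' := H (fun i' _ => ltac:(by rewrite -expr2 sqr_ge0)).
rewrite !ord1 mxE; have := H' i isT; rewrite -expr2 => /eqP; rewrite sqrf_eq0 => /eqP -> //.
Qed.


Definition K k := krylov A r00 k.
Definition inK k (v : 'cV[R]_N) := (v^T <= K k)%MS.

Lemma rowK k (i : 'I_k) : row i (K k) = (A ^+ i *m r00)^T.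
Proof. by rewrite /K /krylov rowK. Qed.

Lemma inKD k u v : inK k u -> inK k v -> inK k (u + v).
Proof. by rewrite /inK linearD /=; apply: addmx_sub. Qed.
Lemma inKZ k a v : inK k v -> inK k (a *: v).
Proof. by rewrite /inK linearZ /=; apply: scalemx_sub. Qed.
Lemma inKN k v : inK k v -> inK k (- v).
Proof. by move=> h; rewrite -scaleN1r; apply: inKZ. Qed.
Lemma inKB k u v : inK k u -> inK k v -> inK k (u - v).
Proof. by move=> hu hv; apply: inKD => //; apply: inKN. Qed.
Lemma inK0 k : inK k 0.
Proof. by rewrite /inK trmx0 sub0mx. Qed.

Lemma inK_pow k i : (i < k)%N -> inK k (A ^+ i *m r00).
Proof. by move=> h; rewrite /inK -(rowK (Ordinal h)) row_sub. Qed.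

Lemma K_mono k m : (k <= m)%N -> (K k <= K m)%MS.
Proof.
move=> h; apply/row_subP => i; rewrite rowK.
by have := inK_pow (leq_trans (ltn_ord i) h).
Qed.

Lemma inK_mono k m v : (k <= m)%N -> inK k v -> inK m v.
Proof. by move=> h hv; apply: submx_trans hv (K_mono h). Qed.

Lemma powS_r i : A ^+ i.+1 *m r00 = A *m (A ^+ i *m r00).
Proof. by rewrite exprS mulmxA. Qed.

Lemma KA_sub k : (K k *m A^T <= K k.+1)%MS.
Proof.
apply/row_subP => i; rewrite row_mul rowK -trmx_mul -powS_r.
exact: (inK_pow (ltn_ord (lift ord0 i))).
Qed.

Lemma inKA k v : inK k v -> inK k.+1 (A *m v).
Proof.
by move=> h; rewrite /inK trmx_mul; apply: submx_trans (submxMr _ h) (KA_sub k).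
Qed.

Lemma K_closed k : inK k (A ^+ k *m r00) -> (K k *m A^T <= K k)%MS.
Proof.
move=> h; apply/row_subP => i; rewrite row_mul rowK -trmx_mul -powS_r.
have := ltn_ord i; rewrite leq_eqVlt => /orP [/eqP e | lt].
  by have -> : A ^+ i.+1 *m r00 = A ^+ k *m r00 by rewrite e.
exact: inK_pow.
Qed.

Lemma K_all k : inK k (A ^+ k *m r00) -> forall i, inK k (A ^+ i *m r00).
Proof.
move=> h; elim=> [|i IH].
  case: k h => [//|k] _; exact: inK_pow.
by rewrite /inK powS_r trmx_mul; apply: submx_trans (submxMr _ IH) (K_closed h).
Qed.

Lemma no_stab n k : is_grade A r00 n -> (k < n)%N -> ~ inK k (A ^+ k *m r00).
Proof.
move=> [[k' hk'] _] lt h.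
have sub : (K k' <= K k)%MS by apply/row_subP => i; rewrite rowK; apply: K_all.
have := mxrankS sub; rewrite /K hk' => h2.
have := leq_trans h2 (rank_leq_row _); rewrite leqNgt lt //.
Qed.

Definition cc k : R := \prod_(i < k) (- g i).

Lemma cg_struct k : inK k (rr k - cc k *: (A ^+ k *m r00)) /\
                    inK k (pp k - cc k *: (A ^+ k *m r00)).
Proof.
elim: k => [|k [IHr IHp]].
  by rewrite /cc big_ord0 scale1r expr0 mul1mx cg_r0 cg_p0 subrr; split; apply: inK0.
have ccS : cc k.+1 = cc k * (- g k) by rewrite /cc big_ord_recr.
have hr : inK k.+1 (rr k).
  rewrite -(subrK (cc k *: (A ^+ k *m r00)) (rr k)).
  apply: inKD; first exact: inK_mono IHr.
  by apply: inKZ; apply: inK_pow.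
have hp : inK k.+1 (pp k).
  rewrite -(subrK (cc k *: (A ^+ k *m r00)) (pp k)).
  apply: inKD; first exact: inK_mono IHp.
  by apply: inKZ; apply: inK_pow.
have e : rr k.+1 - cc k.+1 *: (A ^+ k.+1 *m r00) =
         rr k - g k *: (A *m (pp k - cc k *: (A ^+ k *m r00))).
  rewrite cg_rS ccS powS_r; set w := A ^+ k *m r00.
  rewrite [A *m (_ - _)]mulmxBr -[A *m (cc k *: w)]scalemxAr scalerBr scalerA.
  by rewrite mulrN scaleNr opprK opprB addrA [g k * _]mulrC addrAC.
have hr' : inK k.+1 (rr k.+1 - cc k.+1 *: (A ^+ k.+1 *m r00)).
  by rewrite e; apply: inKB => //; apply: inKZ; apply: inKA.
split=> //.
rewrite cg_pS addrAC; apply: inKD => //; exact: inKZ.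
Qed.

Notation rho k := (dotv (rr k) (rr k)).

Lemma ne0_of_struct n k (v : 'cV[R]_N) : is_grade A r00 n -> (k < n)%N -> cc k != 0 ->
  inK k (v - cc k *: (A ^+ k *m r00)) -> v != 0.
Proof.
move=> hg lt hc h; apply/negP => /eqP v0; apply: (no_stab hg lt).
move: h; rewrite v0 sub0r => /inKN; rewrite opprK => /(inKZ (cc k)^-1).
by rewrite scalerA mulVf // scale1r.
Qed.

Lemma pos n : spd A -> is_grade A r00 n -> forall k, (k < n)%N -> 0 < g k /\ 0 < rho k.
Proof.
move=> [_ hA] hg; elim/ltn_ind => k IH lt.
have hc : cc k != 0.
  apply/prodf_neq0 => i _; rewrite oppr_eq0 gt_eqF //.
  by case: (IH i (ltn_ord i) (ltn_trans (ltn_ord i) lt)).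
have [hr hp] := cg_struct k.
have rn := ne0_of_struct hg lt hc hr.
have pn := ne0_of_struct hg lt hc hp.
have r1 := dotv_gt0 rn.
by split => //; rewrite /gamma divr_gt0 // hA.
Qed.

Lemma Q_pos n : spd A -> is_grade A r00 n -> forall k, (k < n)%N -> 0 < Qk (fun j => rho j) k.
Proof.
move=> hA hg; elim=> [|k IH] lt.
  by rewrite /Qk big_nat1 invr_gt0; case: (pos hA hg lt).
rewrite /Qk big_nat_recr //= addr_gt0 //; first exact: IH (ltnW lt).
by rewrite invr_gt0; case: (pos hA hg lt).
Qed.

Lemma phiE n : spd A -> is_grade A r00 n -> forall k, (k < n)%N ->
  phi A b x0 k = (rho k * Qk (fun j => rho j) k)^-1.
Proof.
move=> hA hg; elim=> [|k IH] lt.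
  have r0p : 0 < rho 0 by case: (pos hA hg lt).
  by rewrite /= /Qk big_nat1 divff ?gt_eqF // invr1.
have ltk : (k < n)%N := ltnW lt.
rewrite /= IH //.
have q0 := Q_pos hA hg ltk.
have [_ rk] := pos hA hg ltk; have [_ rk1] := pos hA hg lt.
have -> : Qk (fun j => rho j) k.+1 = Qk (fun j => rho j) k + (rho k.+1)^-1.
  by rewrite /Qk big_nat_recr.
rewrite /delta /=.
field.
by rewrite !gt_eqF // addr_gt0 // mulr_gt0.
Qed.

Lemma varthetaE n : spd A -> is_grade A r00 n -> forall k, (k <= n)%N ->
  vartheta A b x0 k = Vk (psi A b x0) (fun j => rho j) k.
Proof.
move=> hA hg; elim=> [|k IH] lt.
  by rewrite /= /Vk big_geq.
rewrite /= IH ?(ltnW lt) // V_rec (phiE hA hg lt) invrK /psi; ring.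
Qed.
End S.

Theorem lemma1 (R : rcfType) (N : nat) (A : 'M[R]_N) (b x0 : 'cV[R]_N) (n : nat) :
  spd A ->
  r0 A b x0 != 0 ->
  is_grade A (r0 A b x0) n ->
  (forall k, (k <= n)%N ->
     xi A b x0 k =
     \sum_(0 <= j < k)
        (dotv (cg_r A b x0 j) (cg_r A b x0 j))^-1 *
        (\sum_(j <= i < k) psi A b x0 i) ^+ 2) /\
  (forall k, (k.+1 <= n)%N ->
     xi A b x0 k.+1 =
     xi A b x0 k + psi A b x0 k * (vartheta A b x0 k.+1 + vartheta A b x0 k)).
Proof.
move=> hA _ hg.
have P1 : forall k, (k <= n)%N ->
     xi A b x0 k =
     \sum_(0 <= j < k)
        (dotv (cg_r A b x0 j) (cg_r A b x0 j))^-1 *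
        (\sum_(j <= i < k) psi A b x0 i) ^+ 2.
  case=> [|k] lt; first by rewrite /= big_geq.
  have hpos : forall i, (i < k.+1)%N -> 0 < gamma A b x0 i /\
                 0 < dotv (cg_r A b x0 i) (cg_r A b x0 i).
    by move=> i hi; apply: (pos hA hg); exact: leq_trans hi lt.
  exact: (xi_formula hpos).
split=> // k lt.
have e1 := P1 _ lt; have e0 := P1 _ (ltnW lt).
rewrite e1 e0.
have := F_rec (psi A b x0) (fun j => dotv (cg_r A b x0 j) (cg_r A b x0 j)) k.
rewrite /Fk /Sk => ->.
by rewrite !(varthetaE hA hg) // ltnW.
Qed.
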